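(* Let $0<\eta<1$, set $\gamma_0=0$ and $\gamma_j=(1+\eta\gamma_{j-1}^2)/2$ for $j\ge1$. Then $(\gamma_j)_{j\ge0}$ is an infinite $g$-sequence. Moreover, with $\varepsilon=1-\eta$, the limit $L_\varepsilon=\lim_{j\to\infty}\gamma_j$ exists, $L_\varepsilon=\dfrac{1}{1+\sqrt\varepsilon}$, and for every $j\ge0$, \[ L_\varepsilon-\gamma_j\le L_\varepsilon(1-\sqrt\varepsilon)^j. \]
   Context: An infinite $g$-sequence is a sequence $(\gamma_k)_{k\ge0}$ with $\gamma_0=0$, $\gamma_1=1/2$ and, for every $k\ge1$, $0<\gamma_k<1$ and $\gamma_k<\gamma_{k+1}<(1+\gamma_k^2)/2$. *)

(* Defs.v *)
From Stdlib Require Import Reals.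
Open Scope R_scope.

Definition is_g_sequence (g : nat -> R) : Prop :=
  g 0%nat = 0 /\ g 1%nat = 1 / 2 /\
  forall k : nat, (1 <= k)%nat ->
    0 < g k < 1 /\ g k < g (S k) < (1 + g k ^ 2) / 2.

Fixpoint gamma_seq (eta : R) (j : nat) : R :=
  match j with
  | O => 0
  | S j' => (1 + eta * gamma_seq eta j' ^ 2) / 2
  end.

(* Main.v *)
Require Import Defs.
From Stdlib Require Import Reals Lra Lia Psatz.
Open Scope R_scope.

Lemma gs_S eta j : gamma_seq eta (S j) = (1 + eta * gamma_seq eta j ^ 2) / 2.
Proof. reflexivity. Qed.

Lemma gs_bounds eta s L : 0 < s < 1 -> eta = 1 - s^2 -> L * (1 + s) = 1 ->
  forall j, 0 <= gamma_seq eta j < L /\ gamma_seq eta j < gamma_seq eta (S j).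
Proof.
  intros Hs He HL. assert (HL0 : 0 < L) by nra.
  assert (Hfix : (1 + eta * L^2)/2 = L) by (subst eta; nra).
  induction j as [|j [[H0 H1] H2]].
  - simpl. lra.
  - rewrite gs_S in H2 |- *. rewrite (gs_S eta (S j)).
    rewrite gs_S. set (g := gamma_seq eta j) in *.
    set (g1 := (1 + eta * g ^ 2) / 2) in *.
    assert (eta > 0) by nra.
    split; [split|].
    + unfold g1; nra.
    + rewrite <- Hfix. unfold g1. apply Rmult_lt_compat_r; [lra|].
      apply Rplus_lt_compat_l. apply Rmult_lt_compat_l; nra.
    + apply Rmult_lt_compat_r; [lra|].
      apply Rplus_lt_compat_l. apply Rmult_lt_compat_l; nra.
Qed.

Theorem mainTheorem13 (eta : R) (Heta : 0 < eta < 1) :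
  is_g_sequence (gamma_seq eta) /\
  (let eps := 1 - eta in
   let L := 1 / (1 + sqrt eps) in
   Un_cv (gamma_seq eta) L /\
   forall j : nat, L - gamma_seq eta j <= L * (1 - sqrt eps) ^ j).
Proof.
  set (s := sqrt (1 - eta)).
  assert (Hs2 : s * s = 1 - eta) by (apply sqrt_sqrt; lra).
  assert (Hs0 : 0 < s) by (apply sqrt_lt_R0; lra).
  assert (Hs : 0 < s < 1) by nra.
  assert (He : eta = 1 - s^2) by nra.
  set (L := 1 / (1 + s)).
  assert (HL : L * (1 + s) = 1) by (unfold L; field; lra).
  assert (HL0 : 0 < L) by nra.
  assert (HL1 : L < 1) by nra.
  pose proof (gs_bounds eta s L Hs He HL) as B.
  assert (Herr : forall j, L - gamma_seq eta j <= L * (1 - s) ^ j).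
  { induction j.
    - simpl. lra.
    - rewrite gs_S. change ((1-s)^(S j)) with ((1-s)*(1-s)^j).
      destruct (B j) as [[H0 H1] _].
      set (g := gamma_seq eta j) in *.
      assert (L - (1 + eta * g^2)/2 = eta * (L + g) / 2 * (L - g)) by
        (rewrite He; nra).
      rewrite H.
      assert (eta * (L+g)/2 <= 1 - s) by (rewrite He; nra).
      assert (eta * (L+g)/2 * (L-g) <= (1 - s) * (L - g)) by nra.
      nra. }
  split; [|split; [|exact Herr]].
  - split; [reflexivity|split; [simpl; lra|]].
    intros k Hk. destruct (B k) as [[H0 H1] H2].
    destruct k as [|k]; [lia|].
    destruct (B k) as [[H4 _] H3].
    assert (0 < gamma_seq eta (S k)) by lra.
    split; [lra|split; [exact H2|]].
    rewrite (gs_S eta (S k)). assert (0 < gamma_seq eta (S k) ^ 2) by (apply pow_lt; lra). nra.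
  - intros e He0.
    assert (Ha : Rabs (1 - s) < 1) by (rewrite Rabs_right; lra).
    destruct (pow_lt_1_zero (1 - s) Ha (e / L)) as [N HN].
    { apply Rdiv_lt_0_compat; lra. }
    exists N. intros n Hn. specialize (HN n Hn).
    rewrite Rabs_right in HN by (apply Rle_ge, pow_le; lra).
    destruct (B n) as [[H0 H1] _].
    unfold R_dist. change (Rabs (gamma_seq eta n - L) < e). rewrite Rabs_left; [|lra].
    specialize (Herr n).
    assert (L * (1 - s) ^ n < e).
    { apply (Rmult_lt_compat_l L) in HN; [|lra].
      replace (L * (e / L)) with e in HN by (field; lra). exact HN. }
    lra.
Qed.
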